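(* Let $G$ be a 5-vertex-critical $(P_5,\text{chair})$-free graph and let $C=v_1v_2v_3v_4v_5v_1$ be an induced $C_5$ in $G$. Then $S_0=\varnothing$, i.e. every vertex of $V(G)\setminus V(C)$ has a neighbor in $V(C)$.
   Context: All graphs are finite and simple; $P_5$ is the path on 5 vertices; the chair is a $P_4$ plus a vertex adjacent to exactly one of the two middle vertices of the $P_4$; ''$H$-free'' means no induced subgraph isomorphic to $H$. A graph $G$ is $k$-vertex-critical if $\chi(G)=k$ and $\chi(G-v)<k$ for every $v\in V(G)$. $S_0=\{v\in V(G)\setminus V(C): N(v)\cap V(C)=\varnothing\}$. *)

(* Defs.v *)
From mathcomp Require Import all_boot.
Set Implicit Arguments. Unset Strict Implicit. Unset Printing Implicit Defensive.

Definition simple_graph (T : finType) (e : rel T) : Prop :=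
  symmetric e /\ irreflexive e.

Definition induced_sub (U : finType) (eH : rel U) (T : finType) (e : rel T) : Prop :=
  exists f : U -> T, injective f /\ forall x y, e (f x) (f y) = eH x y.

Definition H_free (U : finType) (eH : rel U) (T : finType) (e : rel T) : Prop :=
  ~ induced_sub eH e.

Definition P5_rel : rel 'I_5 := fun i j => (i.+1 == j :> nat) || (j.+1 == i :> nat).

Definition chair_edge (i j : nat) : bool :=
  [|| (i == 0) && (j == 1), (i == 1) && (j == 2), (i == 2) && (j == 3)
    | (i == 1) && (j == 4)].
Definition chair_rel : rel 'I_5 := fun i j => chair_edge i j || chair_edge j i.

Definition C5_rel : rel 'I_5 :=
  fun i j => (i.+1 %% 5 == j :> nat) || (j.+1 %% 5 == i :> nat).

Definition colorable_on (T : finType) (e : rel T) (S : {set T}) (k : nat) : Prop :=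
  exists c : T -> 'I_k, forall x y, x \in S -> y \in S -> e x y -> c x != c y.

Definition chromatic_number_eq (T : finType) (e : rel T) (k : nat) : Prop :=
  colorable_on e setT k /\ forall j, j < k -> ~ colorable_on e setT j.

Definition chi_lt (T : finType) (e : rel T) (S : {set T}) (k : nat) : Prop :=
  exists j, j < k /\ colorable_on e S j.

Definition vertex_critical (T : finType) (e : rel T) (k : nat) : Prop :=
  chromatic_number_eq e k /\ forall v : T, chi_lt e (setT :\ v) k.

(* Main.v *)
Require Import Defs.
From mathcomp Require Import all_boot fingroup perm.
Set Implicit Arguments. Unset Strict Implicit. Unset Printing Implicit Defensive.

Definition o0 : 'I_5 := @Ordinal 5 0 isT.
Definition o1 : 'I_5 := @Ordinal 5 1 isT.
Definition o2 : 'I_5 := @Ordinal 5 2 isT.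
Definition o3 : 'I_5 := @Ordinal 5 3 isT.
Definition o4 : 'I_5 := @Ordinal 5 4 isT.

Ltac solve_adj irr sym :=
  match goal with
  | |- ?e ?x ?x = _ => by rewrite irr
  | H : is_true (?e ?x ?y) |- ?e ?x ?y = _ => by rewrite H
  | H : is_true (?e ?y ?x) |- ?e ?x ?y = _ => by rewrite sym H
  | H : is_true (~~ ?e ?x ?y) |- ?e ?x ?y = _ => by rewrite (negbTE H)
  | H : is_true (~~ ?e ?y ?x) |- ?e ?x ?y = _ => by rewrite sym (negbTE H)
  end.

Ltac twin key :=
  first [ by move: (key o0) | by move: (key o1) | by move: (key o2)
        | by move: (key o3) | by move: (key o4) | by apply: val_inj ].

Lemma mkP5 (T : finType) (e : rel T) (t0 t1 t2 t3 t4 : T) :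
  symmetric e -> irreflexive e ->
  e t0 t1 -> e t1 t2 -> e t2 t3 -> e t3 t4 ->
  ~~ e t0 t2 -> ~~ e t0 t3 -> ~~ e t0 t4 -> ~~ e t1 t3 -> ~~ e t1 t4 -> ~~ e t2 t4 ->
  induced_sub P5_rel e.
Proof.
move=> sym irr h01 h12 h23 h34 n02 n03 n04 n13 n14 n24.
pose f (k : 'I_5) := nth t0 [:: t0; t1; t2; t3; t4] k.
have adj : forall a b, e (f a) (f b) = P5_rel a b.
  move=> [[|[|[|[|[|a]]]]] Ha] [[|[|[|[|[|b]]]]] Hb] //; rewrite /f /P5_rel /=;
  solve_adj irr sym.
exists f; split => // a b fab.
have key : forall k, P5_rel a k = P5_rel b k by move=> k; rewrite -!adj fab.
move: key; clear fab.
move: a b => [[|[|[|[|[|a]]]]] Ha] [[|[|[|[|[|b]]]]] Hb] // key; twin key.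
Qed.

Lemma mkchair (T : finType) (e : rel T) (t0 t1 t2 t3 t4 : T) :
  symmetric e -> irreflexive e -> t0 != t4 ->
  e t0 t1 -> e t1 t2 -> e t2 t3 -> e t1 t4 ->
  ~~ e t0 t2 -> ~~ e t0 t3 -> ~~ e t0 t4 -> ~~ e t1 t3 -> ~~ e t2 t4 -> ~~ e t3 t4 ->
  induced_sub chair_rel e.
Proof.
move=> sym irr d04 h01 h12 h23 h14 n02 n03 n04 n13 n24 n34.
pose f (k : 'I_5) := nth t0 [:: t0; t1; t2; t3; t4] k.
have adj : forall a b, e (f a) (f b) = chair_rel a b.
  move=> [[|[|[|[|[|a]]]]] Ha] [[|[|[|[|[|b]]]]] Hb] //; rewrite /f /chair_rel /chair_edge /=;
  solve_adj irr sym.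
exists f; split => // a b fab.
have key : forall k, chair_rel a k = chair_rel b k by move=> k; rewrite -!adj fab.
move: key fab.
move: a b => [[|[|[|[|[|a]]]]] Ha] [[|[|[|[|[|b]]]]] Hb] // key; try (move=> _; twin key).
- by rewrite /f /= => E; move: d04; rewrite E eqxx.
- by rewrite /f /= => E; move: d04; rewrite E eqxx.
Qed.

Lemma ord5_cases (P : 'I_5 -> Prop) : P o0 -> P o1 -> P o2 -> P o3 -> P o4 -> forall i, P i.
Proof.
move=> h0 h1 h2 h3 h4 [[|[|[|[|[|i]]]]] Hi] //.
- by have -> : Ordinal Hi = o0 by apply: val_inj.
- by have -> : Ordinal Hi = o1 by apply: val_inj.
- by have -> : Ordinal Hi = o2 by apply: val_inj.
- by have -> : Ordinal Hi = o3 by apply: val_inj.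
- by have -> : Ordinal Hi = o4 by apply: val_inj.
Qed.

Lemma fP5 (T : finType) (e : rel T) (c : 'I_5 -> T) :
  symmetric e -> irreflexive e -> H_free P5_rel e ->
  (forall i j, e (c i) (c j) = C5_rel i j) ->
  forall (i j k : 'I_5) x y, C5_rel i j -> C5_rel j k -> ~~ C5_rel i k ->
  (forall l, ~~ e x (c l)) -> e x y -> e y (c i) -> e y (c j) || e y (c k).
Proof.
move=> sym irr Pf hc i j k x y ij jk ik hx xy yi.
apply: contraT; rewrite negb_or => /andP [nj nk]; exfalso; apply: Pf.
by apply: (mkP5 (t0:=x) (t1:=y) (t2:=c i) (t3:=c j) (t4:=c k)); rewrite ?hc.
Qed.

Lemma fch1 (T : finType) (e : rel T) (c : 'I_5 -> T) :
  symmetric e -> irreflexive e -> H_free chair_rel e -> injective c ->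
  (forall i j, e (c i) (c j) = C5_rel i j) ->
  forall (i j k : 'I_5) x y, C5_rel j i -> C5_rel i k -> ~~ C5_rel j k -> j != k ->
  (forall l, ~~ e x (c l)) -> e x y -> e y (c i) -> e y (c j) || e y (c k).
Proof.
move=> sym irr Cf ci hc i j k x y ij jk ik njk hx xy yi.
apply: contraT; rewrite negb_or => /andP [nj nk]; exfalso; apply: Cf.
apply: (mkchair (t0:=c j) (t1:=c i) (t2:=y) (t3:=x) (t4:=c k));
  rewrite ?hc ?(inj_eq ci) //; try by rewrite sym ?hc.
Qed.

Lemma fch2 (T : finType) (e : rel T) (c : 'I_5 -> T) :
  symmetric e -> irreflexive e -> H_free chair_rel e ->
  (forall i j, e (c i) (c j) = C5_rel i j) ->
  forall (a p q : 'I_5) x y, C5_rel q a -> ~~ C5_rel p a -> ~~ C5_rel p q ->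
  (forall l, x != c l) -> (forall l, ~~ e x (c l)) -> e x y ->
  ~~ e y (c a) -> e y (c p) -> e y (c q) -> False.
Proof.
move=> sym irr Cf hc a p q x y qa pa pq hx' hx xy na yp yq; apply: Cf.
apply: (mkchair (t0:=c p) (t1:=y) (t2:=c q) (t3:=c a) (t4:=x));
  rewrite ?hc // ?(eq_sym (c p)); try by rewrite sym ?hc.
exact: hx'.
Qed.

Lemma pat (b0 b1 b2 b3 b4 : bool) :
  [|| b0, b1, b2, b3 | b4] ->
  (b0 -> b1 || b2) -> (b0 -> b4 || b3) -> (b0 -> b4 || b1) -> (~~ b0 -> b3 -> b1 -> False) ->
  (b1 -> b2 || b3) -> (b1 -> b0 || b4) -> (b1 -> b0 || b2) -> (~~ b1 -> b4 -> b2 -> False) ->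
  (b2 -> b3 || b4) -> (b2 -> b1 || b0) -> (b2 -> b1 || b3) -> (~~ b2 -> b0 -> b3 -> False) ->
  (b3 -> b4 || b0) -> (b3 -> b2 || b1) -> (b3 -> b2 || b4) -> (~~ b3 -> b1 -> b4 -> False) ->
  (b4 -> b0 || b1) -> (b4 -> b3 || b2) -> (b4 -> b3 || b0) -> (~~ b4 -> b2 -> b0 -> False) ->
  [&& b0, b1, b2, b3 & b4].
Proof.
case: b0; case: b1; case: b2; case: b3; case: b4 => //=; intros;
repeat match goal with
 | H : is_true ?b -> _ |- _ =>
     first [ let h := fresh in have h : b by []; specialize (H h); clear h | clear H ]
 | H : ~~ ?b -> _ |- _ =>
     first [ let h := fresh in have h : ~~ b by []; specialize (H h); clear h | clear H ]
 end; simpl in *; done.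
Qed.

Definition fc_ok (a b x0 x1 x2 x3 x4 : nat) : bool :=
  ~~ [&& a != b, x0 != a, x0 != b, x1 != a, x1 != b, x2 != a, x2 != b, x3 != a, x3 != b,
         x4 != a, x4 != b, x0 != x1, x1 != x2, x2 != x3, x3 != x4 & x4 != x0].

Lemma fc_all : all (fun a => all (fun b => all (fun x0 => all (fun x1 => all (fun x2 =>
  all (fun x3 => all (fun x4 => fc_ok a b x0 x1 x2 x3 x4) (iota 0 4)) (iota 0 4)) (iota 0 4))
  (iota 0 4)) (iota 0 4)) (iota 0 4)) (iota 0 4).
Proof. vm_compute. reflexivity. Qed.

Lemma five_cycle (a b x0 x1 x2 x3 x4 : 'I_4) :
  a != b -> x0 != a -> x0 != b -> x1 != a -> x1 != b -> x2 != a -> x2 != b ->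
  x3 != a -> x3 != b -> x4 != a -> x4 != b ->
  x0 != x1 -> x1 != x2 -> x2 != x3 -> x3 != x4 -> x4 != x0 -> False.
Proof.
have mi : forall t : 'I_4, val t \in iota 0 4 by move=> t; rewrite mem_iota ltn_ord.
move: fc_all => /allP /(_ _ (mi a)) /allP /(_ _ (mi b)) /allP /(_ _ (mi x0))
  /allP /(_ _ (mi x1)) /allP /(_ _ (mi x2)) /allP /(_ _ (mi x3)) /allP /(_ _ (mi x4)).
rewrite /fc_ok => /negP H; intros; apply: H.
by repeat (apply/andP; split) => //.
Qed.

Lemma allC (T : finType) (e : rel T) (c : 'I_5 -> T) :
  symmetric e -> irreflexive e -> H_free P5_rel e -> H_free chair_rel e -> injective c ->
  (forall i j, e (c i) (c j) = C5_rel i j) ->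
  forall x y, (forall l, x != c l) -> (forall l, ~~ e x (c l)) -> e x y ->
  (exists i, e y (c i)) -> forall i, e y (c i).
Proof.
move=> sym irr Pf Cf ci hc x y hx' hx xy [i0 yi0].
have fP := fP5 sym irr Pf hc.
have f1 := fch1 sym irr Cf ci hc.
have f2 := fch2 sym irr Cf hc.
have p0 := fP (o0) (o1) (o2) x y isT isT isT hx xy.
have q0 := fP (o0) (o4) (o3) x y isT isT isT hx xy.
have r0 := f1 (o0) (o4) (o1) x y isT isT isT isT hx xy.
have s0 := f2 (o0) (o3) (o1) x y isT isT isT hx' hx xy.
have p1 := fP (o1) (o2) (o3) x y isT isT isT hx xy.
have q1 := fP (o1) (o0) (o4) x y isT isT isT hx xy.
have r1 := f1 (o1) (o0) (o2) x y isT isT isT isT hx xy.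
have s1 := f2 (o1) (o4) (o2) x y isT isT isT hx' hx xy.
have p2 := fP (o2) (o3) (o4) x y isT isT isT hx xy.
have q2 := fP (o2) (o1) (o0) x y isT isT isT hx xy.
have r2 := f1 (o2) (o1) (o3) x y isT isT isT isT hx xy.
have s2 := f2 (o2) (o0) (o3) x y isT isT isT hx' hx xy.
have p3 := fP (o3) (o4) (o0) x y isT isT isT hx xy.
have q3 := fP (o3) (o2) (o1) x y isT isT isT hx xy.
have r3 := f1 (o3) (o2) (o4) x y isT isT isT isT hx xy.
have s3 := f2 (o3) (o1) (o4) x y isT isT isT hx' hx xy.
have p4 := fP (o4) (o0) (o1) x y isT isT isT hx xy.
have q4 := fP (o4) (o3) (o2) x y isT isT isT hx xy.
have r4 := f1 (o4) (o3) (o0) x y isT isT isT isT hx xy.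
have s4 := f2 (o4) (o2) (o0) x y isT isT isT hx' hx xy.
have ex : [|| e y (c o0), e y (c o1), e y (c o2), e y (c o3) | e y (c o4)].
  by move: i0 yi0; apply: ord5_cases => ->; rewrite ?orbT.
have := pat ex p0 q0 r0 s0 p1 q1 r1 s1 p2 q2 r2 s2 p3 q3 r3 s3 p4 q4 r4 s4.
case/and5P=> h0 h1 h2 h3 h4.
by apply: ord5_cases.
Qed.

Lemma col4 (T : finType) (e : rel T) (S : {set T}) :
  chi_lt e S 5 -> exists f : T -> 'I_4, forall x y, x \in S -> y \in S -> e x y -> f x != f y.
Proof.
case=> j [jlt [f hf]].
have le : j <= 4 by [].
exists (fun x => widen_ord le (f x)) => x y xS yS xy.
by have := hf x y xS yS xy; apply: contra => /eqP [] h; apply/eqP/val_inj.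
Qed.

Theorem mainTheorem4 (T : finType) (e : rel T) (c : 'I_5 -> T) :
  simple_graph e ->
  vertex_critical e 5 ->
  H_free P5_rel e ->
  H_free chair_rel e ->
  injective c ->
  (forall i j, e (c i) (c j) = C5_rel i j) ->
  forall v : T, (forall i, v != c i) -> exists i, e v (c i).
Proof.
move=> [sym irr] [[_ not4] crit] Pf Cf ci hc v hv.
case: (boolP [exists i, e v (c i)]) => [/existsP // | /existsPn nv].
exfalso; apply: (not4 4 isT).
pose S0 := [set x | [forall i, (x != c i) && ~~ e x (c i)]].
have inS0 : forall x, x \in S0 -> (forall i, x != c i) /\ (forall i, ~~ e x (c i)).
  by move=> x; rewrite inE => /forallP H; split=> i; case/andP: (H i).
have vS0 : v \in S0.
  rewrite inE; apply/forallP => i; apply/andP; split; [exact: hv | exact: nv].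
pose e' := [rel a b | [&& e a b, a \in S0 & b \in S0]].
have sym' : symmetric e'.
  move=> a b; rewrite /e' /= sym.
  by case: (a \in S0); case: (b \in S0); rewrite ?andbF.
pose K := [set x | connect e' v x].
have vK : v \in K by rewrite inE connect0.
have pathS0 : forall p x, x \in S0 -> path e' x p -> last x p \in S0.
  elim=> [//|a p IH] x xS /= /andP [/and3P [_ _ aS] pp]; exact: IH.
have KS : forall x, x \in K -> x \in S0.
  by move=> x; rewrite inE => /connectP [p pp ->]; apply: pathS0.
have Kcl : forall x z, x \in K -> z \in S0 -> e x z -> z \in K.
  move=> x z xK zS xz; rewrite inE; apply: connect_trans (_ : connect e' v x) _.
    by rewrite inE in xK.
  by apply: connect1; rewrite /= xz KS.
have L1 : forall x y, x \in S0 -> e x y -> y \notin S0 -> forall i, e y (c i).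
  move=> x y xS xy yS; have [hx' hx] := inS0 _ xS.
  apply: (allC sym irr Pf Cf ci hc hx' hx xy).
  move: yS; rewrite inE negb_forall => /existsP [i]; rewrite negb_and negbK => /orP [/eqP yc|yi].
    by move: (hx i); rewrite -yc xy.
  by exists i; rewrite negbK in yi.
have L2 : forall x y z, x \in S0 -> e x y -> y \notin S0 -> z \in S0 -> e x z -> e y z.
  move=> x y z xS xy yS zS xz; apply: contraT => nyz; exfalso; apply: Cf.
  have [hx' hx] := inS0 _ xS; have [hz' hz] := inS0 _ zS.
  have yc := L1 _ _ xS xy yS.
  apply: (mkchair (t0:=c o0) (t1:=y) (t2:=x) (t3:=z) (t4:=c o2)) => //.
  - by rewrite (inj_eq ci).
  - by rewrite sym yc.
  - by rewrite sym.
  - by rewrite sym hx.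
  - by rewrite sym hz.
  - by rewrite hc.
have L3p : forall y p x, x \in S0 -> e x y -> y \notin S0 -> path e' x p -> e y (last x p).
  move=> y; elim=> [|a p IH] x xS xy yS /=; first by rewrite sym.
  case/andP => /and3P [xa _ aS] pp; apply: IH => //.
  by rewrite sym (L2 x y a).
have L3 : forall x y z, x \in K -> e x y -> y \notin K -> z \in K -> e y z.
  move=> x y z xK xy yK zK.
  have yS : y \notin S0 by apply: contra yK => yS; apply: Kcl xK yS xy.
  have : connect e' x z.
    apply: connect_trans (_ : connect e' x v) _.
      by rewrite (sym_connect_sym sym'); rewrite inE in xK.
    by rewrite inE in zK.
  by case/connectP => p pp ->; apply: L3p => //; apply: KS.
have [phi hphi] := col4 (crit v).
have [psi hpsi] := col4 (crit (c o0)).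
have hphi' : forall x z, x \notin K -> z \notin K -> e x z -> phi x != phi z.
  move=> x z xK zK xz; apply: hphi => //; rewrite !inE andbT.
    by apply: contra xK => /eqP ->.
  by apply: contra zK => /eqP ->.
have Kc0 : forall x, x \in K -> x != c o0.
  by move=> x /KS /inS0 [h _].
have cK : forall i, c i \notin K.
  by move=> i; apply/negP => /KS /inS0 [h _]; move: (h i); rewrite eqxx.
have [s hmix] : exists s : {perm 'I_4},
    forall x z, x \in K -> z \notin K -> e x z -> s (psi x) != phi z.
  case: (pickP (fun y => (y \notin K) && [exists x in K, e x y])).
  - move=> y /andP [yK /existsP [x0 /andP [x0K x0y]]].
    exists (tperm (psi y) (phi y)) => x z xK zK xz.
    have allC' : forall w x1, x1 \in K -> e x1 w -> w \notin K -> forall i, e w (c i).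
      move=> w x1 x1K x1w wK; apply: (L1 x1) => //; first exact: KS.
      by apply: contra wK => wS; apply: Kcl x1K wS x1w.
    have yC := allC' y x0 x0K x0y yK.
    have zC := allC' z x xK xz zK.
    have ez : phi z = phi y.
      apply/eqP; apply: contraT => nzy; exfalso.
      have hz : forall i, phi (c i) != phi z.
        by move=> i; apply: hphi'; rewrite ?cK // sym zC.
      have hy : forall i, phi (c i) != phi y.
        by move=> i; apply: hphi'; rewrite ?cK // sym yC.
      apply: (five_cycle nzy (hz o0) (hy o0) (hz o1) (hy o1) (hz o2) (hy o2)
                (hz o3) (hy o3) (hz o4) (hy o4)); apply: hphi'; rewrite ?cK ?hc //.
    rewrite ez -{2}(tpermL (psi y) (phi y)) (inj_eq perm_inj).
    have yc0 : y != c o0 by apply/eqP => ey; move: (yC o0); rewrite ey irr.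
    apply: hpsi; [by rewrite in_setD1 in_setT andbT Kc0 | by rewrite in_setD1 in_setT andbT | by rewrite sym; apply: (L3 x0)].
  - move=> none; exists (1%g : {perm 'I_4}) => x z xK zK xz; exfalso.
    by move: (none z); rewrite zK /=; move/existsP; apply; exists x; rewrite xK.
exists (fun x => if x \in K then s (psi x) else phi x) => x z _ _ xz.
case: (boolP (x \in K)) => xK; case: (boolP (z \in K)) => zK.
- rewrite (inj_eq perm_inj); apply: hpsi; rewrite ?inE ?andbT ?Kc0 //.
- exact: hmix.
- by rewrite eq_sym; apply: hmix; rewrite // sym.
- exact: hphi'.
Qed.
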